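(* Let $R$ be an associative ring with identity and involution $*$, and let $a\in R^{\#}\cap R^{\dagger}$. Then $a\in R^{SEP}$ if and only if $a(a^{\#})^*a^{\dagger}$ and $a^{\dagger}a^2$ are left $a^{\dagger}aa^{\#}$-equivalent, i.e. $a^{\dagger}aa^{\#}\,a(a^{\#})^*a^{\dagger}=a^{\dagger}aa^{\#}\,a^{\dagger}a^2$.
   Context: An involution on $R$ is a map $x\mapsto x^*$ with $(x^* )^*=x$, $(x+y)^*=x^*+y^*$, $(xy)^*=y^*x^*$. An element $a$ is Moore–Penrose invertible if there is $b$ with $aba=a$, $bab=b$, $(ab)^*=ab$, $(ba)^*=ba$; such $b$ is unique, denoted $a^{\dagger}$, and $R^{\dagger}$ is the set of such $a$. An element $a$ is group invertible if there is $b$ with $aba=a$, $bab=b$, $ab=ba$; such $b$ is unique, denoted $a^{\#}$, and $R^{\#}$ is the set of such $a$. For $a\in R^{\#}\cap R^{\dagger}$, $a$ is SEP if $a^*=a^{\dagger}=a^{\#}$; $R^{SEP}$ denotes the set of SEP elements. For $x,b,c\in R$, $b$ and $c$ are left $x$-equivalent if $xb=xc$. *)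

(* Defs.v *)
From mathcomp Require Import all_boot all_algebra.
Set Implicit Arguments. Unset Strict Implicit. Unset Printing Implicit Defensive.
Import GRing.Theory.
Local Open Scope ring_scope.

Definition involution (R : pzRingType) (star : R -> R) : Prop :=
  [/\ forall x, star (star x) = x,
      forall x y, star (x + y) = star x + star y &
      forall x y, star (x * y) = star y * star x].

Definition is_MP_inverse (R : pzRingType) (star : R -> R) (a b : R) : Prop :=
  [/\ a * b * a = a, b * a * b = b, star (a * b) = a * b & star (b * a) = b * a].

Definition is_group_inverse (R : pzRingType) (a b : R) : Prop :=
  [/\ a * b * a = a, b * a * b = b & a * b = b * a].

Definition MP_invertible (R : pzRingType) (star : R -> R) (a : R) : Prop :=
  exists b, is_MP_inverse star a b.
Definition group_invertible (R : pzRingType) (a : R) : Prop :=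
  exists b, is_group_inverse a b.

Definition SEP (R : pzRingType) (star : R -> R) (a : R) : Prop :=
  exists b c, [/\ is_group_inverse a b, is_MP_inverse star a c,
                  star a = c & c = b].

Definition left_equiv (R : pzRingType) (x b c : R) : Prop := x * b = x * c.

(* Main.v *)
Require Import Defs.
From mathcomp Require Import all_boot all_algebra.
Import GRing.Theory.
Local Open Scope ring_scope.
Lemma group_inv_uniq (R : pzRingType) (a b c : R) :
  is_group_inverse a b -> is_group_inverse a c -> b = c.
Proof.
move=> [b1 b2 b3] [c1 c2 c3].
have e0 : b * b * a = b by rewrite -mulrA -b3 mulrA b2.
have e0' : a * c * c = c by rewrite c3 c2.
have e1 : b * a * c = b.
  transitivity (b * b * (a * c * a)); first by rewrite !mulrA e0 -(mulrA b c a) -c3 mulrA.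
  by rewrite c1 e0.
have e2 : b * a * c = c.
  transitivity (b * a * (a * c * c)); first by rewrite e0'.
  by rewrite !mulrA -b3 b1 e0'.
by rewrite -e1 e2.
Qed.
Lemma MP_inv_uniq (R : pzRingType) (star : R -> R) (a b c : R) :
  involution star -> is_MP_inverse star a b -> is_MP_inverse star a c -> b = c.
Proof.
move=> [ss sD sM] [b1 b2 b3 b4] [c1 c2 c3 c4].
have e1 : b * a * c = b.
  transitivity (b * star (a * b) * star (a * c)); first by rewrite b3 c3 !mulrA b2.
  by rewrite -mulrA -sM !mulrA c1 b3 mulrA b2.
have e2 : b * a * c = c.
  transitivity (star (b * a) * star (c * a) * c); first by rewrite b4 c4 -(mulrA _ (c * a) c) c2.
  by rewrite -sM -(mulrA c a (b * a)) (mulrA a b a) b1 c4 c2.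
by rewrite -e1 e2.
Qed.
Theorem theorem5p4 (R : pzRingType) (star : R -> R) (a ag am : R) :
  involution star ->
  is_group_inverse a ag ->       (* ag = a^# *)
  is_MP_inverse star a am ->     (* am = a^† *)
  (SEP star a <->
   left_equiv (am * a * ag) (a * star ag * am) (am * a ^+ 2)).
Proof.
move=> Hs Hg Hm.
have [ss sD sM] := Hs.
have [g1 g2 g3] := Hg.
have [m1 m2 m3 m4] := Hm.
have f1 : a * a * ag = a by rewrite -mulrA g3 mulrA g1.
have f2 : ag * ag * a = ag by rewrite -mulrA -g3 mulrA g2.
have f4 : ag * a * a = a by rewrite -g3 g1.
rewrite /left_equiv expr2.
split.
  move=> [b [c [Hb Hc sac cb]]].
  have cm : c = am := @MP_inv_uniq R star a c am Hs Hc Hm.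
  have bg : b = ag := @group_inv_uniq R a b ag Hb Hg.
  have mg : am = ag by rewrite -cm cb bg.
  have sg : star ag = a by rewrite -mg -cm -sac ss.
  rewrite sg mg g2.
  by rewrite f1 (mulrA ag a a) f4.
move=> C.
have sg1 : star ag = star a * star ag * star ag.
  transitivity (star (ag * ag * a)); first by rewrite f2.
  by rewrite !sM mulrA.
have sa2 : star a = am * a * star a.
  by rewrite -{1}m1 -mulrA sM m4.
have mag : am * a * star ag = star ag.
  by rewrite {1}sg1 !mulrA -sa2.
have C' : star ag * am = am * a * ag * am * a * a.
  rewrite !mulrA in C; rewrite -C.
  transitivity (am * (a * ag * a) * star ag * am); first by rewrite g1 mag.
  by rewrite !mulrA.
have D : star ag * am * a * ag = star ag * am.
  rewrite C'; transitivity (am * a * ag * am * a * (a * a * ag)); first by rewrite !mulrA.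
  by rewrite f1.
have F : star am * ag = star ag * am.
  have := congr1 star D.
  rewrite !sM ss (mulrA (star a) (star am)) -sM m4 !mulrA D => E.
  by rewrite E.
have G : star a * star ag * am = am * a * ag.
  by rewrite -mulrA -F mulrA -sM m4.
have H1 : am * a * ag = am.
  rewrite -G.
  transitivity (star a * star ag * am * a * am).
    by rewrite -(mulrA _ am a) -(mulrA _ (am * a) am) m2.
  rewrite G; transitivity (am * (a * ag * a) * am); first by rewrite !mulrA.
  by rewrite g1 m2.
have amag : a * am = a * ag by rewrite -{1}H1 !mulrA m1.
have sa1 : star a = ag * a * star a.
  transitivity (star (a * (ag * a))); first by rewrite mulrA g1.
  by rewrite sM -g3 -amag m3 amag g3.
have ma : am * a = ag * a.
  transitivity (star (am * a)); first by rewrite m4.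
  rewrite sM {1}sa1.
  transitivity (ag * a * star (am * a)); first by rewrite sM mulrA.
  rewrite m4; transitivity (ag * (a * am * a)); first by rewrite !mulrA.
  by rewrite m1.
have mg : am = ag by rewrite -{1}g2 -ma H1.
rewrite mg in C'.
have E1 : star ag * ag = ag * a.
  by rewrite C' g2 f2.
have E2 : star ag * ag * a = a by rewrite E1 f4.
have sam : star a = ag.
  transitivity (star (star ag * ag * a)); first by rewrite E2.
  by rewrite !sM ss mulrA -sM -g3 -amag m3 amag g3 g2.
exists ag, am; split => //; by rewrite mg.
Qed.
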